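(* Let $\alpha,\delta\in(0,1)$, $m=\alpha n$, $k>-\frac{\ln\left(\frac{2}{1+\delta}-1\right)}{\ln(1+\delta)}$, and let $\lambda^*<\frac12$ satisfy $H(\lambda^* )=\alpha\log_2(1+\delta)$. Then for all $\lambda<\lambda^*$, $$\lim_{n\to\infty}\sum_{1\le w\le\lambda n}\binom{n}{w}\frac{1}{2^m}\left(1+\left(1-2\frac{k\ln m}{m}\right)^w\right)^m=0.$$
   Context: $H(p)=-p\log_2p-(1-p)\log_2(1-p)$ is the binary entropy function; $\ln$ is the natural logarithm. *)

(* Defs.v *)
From Stdlib Require Import Reals.
From Coquelicot Require Import Coquelicot.
Open Scope R_scope.

Definition log2 (x : R) : R := ln x / ln 2.

Definition H (p : R) : R := - p * log2 p - (1 - p) * log2 (1 - p).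

Definition mm (alpha : R) (n : nat) : R := alpha * INR n.

Definition summand (alpha k : R) (n w : nat) : R :=
  let m := mm alpha n in
  Binomial.C n w * / Rpower 2 m * Rpower (1 + (1 - 2 * (k * ln m / m)) ^ w) m.

Definition S (alpha k lam : R) (n : nat) : R :=
  sum_f_R0 (fun w : nat =>
    if Nat.eqb w 0 then 0
    else if Rle_dec (INR w) (lam * INR n) then summand alpha k n w else 0) n.

(* Main.v *)
Require Import Defs.
From Stdlib Require Import Reals Lra Lia.
From Coquelicot Require Import Coquelicot.
Open Scope R_scope.
From Stdlib Require Import Lra Lia.

Lemma exp_le' x y : x <= y -> exp x <= exp y.
Proof. intros [H|H]; [left; apply exp_increasing; exact H| subst; lra]. Qed.

Lemma ln_le_sub1 t : 0 < t -> ln t <= t - 1.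
Proof. intros Ht. pose proof (exp_ineq1_le (ln t)). rewrite exp_ln in H; lra. Qed.

Lemma pow_exp_ln x n : 0 < x -> x ^ n = exp (INR n * ln x).
Proof. intros Hx. rewrite <- Rpower_pow by exact Hx. reflexivity. Qed.

Lemma exp_pow' a n : exp a ^ n = exp (INR n * a).
Proof. rewrite pow_exp_ln by apply exp_pos. rewrite ln_exp. reflexivity. Qed.

Lemma L_G m y : 0 < m -> 0 <= y -> exp (m * (ln (1 + y) - ln 2)) <= exp (- (m * (1 - y) / 2)).
Proof.
  intros Hm Hy. apply exp_le'.
  rewrite <- ln_div by lra.
  pose proof (ln_le_sub1 ((1+y)/2)). assert (0 < (1+y)/2) by lra.
  specialize (H H0).
  assert (m * ln ((1 + y) / 2) <= m * ((1+y)/2 - 1)) by (apply Rmult_le_compat_l; lra).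
  lra.
Qed.

Lemma L_uw e w : 0 < e < 1 -> (1 - e) ^ w <= exp (- (e * INR w)).
Proof.
  intros He. replace (- (e * INR w)) with (INR w * (- e)) by ring.
  rewrite <- exp_pow'. apply pow_incr. split; [lra|].
  pose proof (exp_ineq1_le (-e)); lra.
Qed.

Lemma L_1mexp s : 0 <= s -> s / (1 + s) <= 1 - exp (- s).
Proof.
  intros Hs. rewrite exp_Ropp. pose proof (exp_ineq1_le s).
  assert (/ exp s <= / (1 + s)) by (apply Rinv_le_contravar; lra).
  assert (s / (1+s) = 1 - / (1+s)) by (field; lra). lra.
Qed.

Lemma sum_ge_term f n i : (forall j, 0 <= f j) -> (i <= n)%nat -> f i <= sum_f_R0 f n.
Proof.
  intros Hf. induction n; intros Hi.
  - assert (i = 0%nat) by lia. subst. simpl. lra.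
  - destruct (Nat.eq_dec i (Datatypes.S n)) as [->|Hne].
    + simpl. pose proof (cond_pos_sum f n Hf) as HH. specialize (Hf (Datatypes.S n)).
      lra.
    + simpl. specialize (IHn ltac:(lia)). specialize (Hf (Datatypes.S n)). lra.
Qed.

Lemma C_nonneg n w : 0 <= Binomial.C n w.
Proof.
  unfold Binomial.C. apply Rlt_le. apply Rdiv_lt_0_compat. apply INR_fact_lt_0.
  apply Rmult_lt_0_compat; apply INR_fact_lt_0.
Qed.

Lemma L_binom n w x : 0 < x -> (w <= n)%nat -> Binomial.C n w <= (1 + x) ^ n / x ^ w.
Proof.
  intros Hx Hw. rewrite Rplus_comm, binomial.
  assert (Hxw : 0 < x ^ w) by (apply pow_lt; lra).
  apply (Rmult_le_reg_r (x ^ w)); [exact Hxw|].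
  unfold Rdiv. rewrite Rmult_assoc, Rinv_l by lra. rewrite Rmult_1_r.
  eapply Rle_trans; [| apply (sum_ge_term (fun i => Binomial.C n i * x ^ i * 1 ^ (n - i)) n w)].
  - rewrite pow1. lra.
  - intros j. cbv beta. rewrite pow1. apply Rmult_le_pos; [apply Rmult_le_pos|]. apply C_nonneg.
    apply pow_le; lra. lra.
  - exact Hw.
Qed.

Lemma L_binom_exp n w x : 0 < x -> (w <= n)%nat -> Binomial.C n w <= exp (INR n * x) * / x ^ w.
Proof.
  intros Hx Hw. eapply Rle_trans. apply L_binom; eauto.
  unfold Rdiv. apply Rmult_le_compat_r. left; apply Rinv_0_lt_compat, pow_lt; lra.
  rewrite <- exp_pow'. apply pow_incr. pose proof (exp_ineq1_le x). lra.
Qed.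

Theorem lemma7 (alpha delta k lamstar : R)
  (Halpha : 0 < alpha < 1) (Hdelta : 0 < delta < 1)
  (Hk : k > - ln (2 / (1 + delta) - 1) / ln (1 + delta))
  (Hls : 0 < lamstar < 1 / 2)
  (HH : H lamstar = alpha * log2 (1 + delta)) :
  forall lam : R, lam < lamstar ->
    is_lim_seq (fun n : nat => S alpha k lam n) 0.
Proof.
  intros lam Hlam.
  destruct (Rle_lt_dec lam 0) as [Hl0|Hl0].
  { apply is_lim_seq_ext with (fun _ => 0).
    - intros n. unfold S. transitivity (sum_f_R0 (fun _ => 0) n).
      + rewrite sum_cte. ring.
      + apply sum_eq. intros w _. destruct (Nat.eqb w 0) eqn:E; [reflexivity|].
        destruct (Rle_dec (INR w) (lam * INR n)) as [h|h]; [|reflexivity].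
        exfalso. apply Nat.eqb_neq in E. assert (1 <= INR w) by (apply (le_INR 1); lia).
        pose proof (pos_INR n). assert (lam * INR n <= 0) by nra. lra.
    - apply is_lim_seq_const. }
  assert (Hk1 : 1 < k).
  { assert (Hd1 : 0 < ln (1 + delta)) by (rewrite <- ln_1; apply ln_increasing; lra).
    assert (E : 2 / (1 + delta) - 1 = (1 - delta) / (1 + delta)) by (field; lra).
    rewrite E in Hk. rewrite ln_div in Hk by lra.
    assert (ln (1 - delta) < 0) by (rewrite <- ln_1; apply ln_increasing; lra).
    assert (1 <= - (ln (1 - delta) - ln (1 + delta)) / ln (1 + delta)).
    { apply (Rmult_le_reg_r (ln (1+delta))); [lra|]. unfold Rdiv. rewrite Rmult_assoc, Rinv_l by lra. lra. }
    lra. }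
  set (c := (k - 1) / 2).
  set (kp := k / (1 + c)).
  set (gam := c / (2 * (1 + c))).
  set (eta0 := (1 - delta) / (2 * (1 + delta))).
  set (L := - ln eta0).
  set (kap := ln 2 - ln (1 + delta) - ln (1 + eta0)).
  set (beta := alpha * Rmin (gam / 2) kap).
  assert (Hc : 0 < c) by (unfold c; lra).
  assert (Hkp : 1 < kp).
  { unfold kp. apply (Rmult_lt_reg_r (1 + c)); [lra|]. unfold Rdiv. rewrite Rmult_assoc, Rinv_l by lra. unfold c; lra. }
  assert (Hgam : 0 < gam) by (unfold gam; apply Rdiv_lt_0_compat; lra).
  assert (Heta : 0 < eta0 < 1/2).
  { unfold eta0. split. apply Rdiv_lt_0_compat; lra.
    apply (Rmult_lt_reg_r (2 * (1 + delta))); [lra|]. unfold Rdiv. rewrite Rmult_assoc, Rinv_l by lra. lra. }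
  assert (HL : 0 < L).
  { unfold L. assert (ln eta0 < 0) by (rewrite <- ln_1; apply ln_increasing; lra). lra. }
  assert (HeL : exp (- L) = eta0) by (unfold L; rewrite Ropp_involutive; apply exp_ln; lra).
  assert (Hkap : 0 < kap).
  { unfold kap. assert (ln ((1 + delta) * (1 + eta0)) = ln (1+delta) + ln (1+eta0)) by (apply ln_mult; lra).
    assert ((1 + delta) * (1 + eta0) < 2).
    { unfold eta0. replace ((1 + delta) * (1 + (1 - delta) / (2 * (1 + delta)))) with ((3 + delta)/2) by (field; lra). lra. }
    assert (ln ((1 + delta) * (1 + eta0)) < ln 2) by (apply ln_increasing; nra). lra. }
  assert (Hbeta : 0 < beta).
  { unfold beta. apply Rmult_lt_0_compat; [lra|]. unfold Rmin. destruct (Rle_dec (gam/2) kap); lra. }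
  assert (Hbeta1 : beta <= alpha * (gam / 2)) by (unfold beta; apply Rmult_le_compat_l; [lra|apply Rmin_l]).
  assert (Hbeta2 : beta <= alpha * kap) by (unfold beta; apply Rmult_le_compat_l; [lra|apply Rmin_r]).
  assert (Hent : - lamstar * ln lamstar - (1 - lamstar) * ln (1 - lamstar) = alpha * ln (1 + delta)).
  { unfold H, log2 in HH. assert (0 < ln 2) by (rewrite <- ln_1; apply ln_increasing; lra).
    transitivity ((- lamstar * (ln lamstar / ln 2) - (1 - lamstar) * (ln (1 - lamstar) / ln 2)) * ln 2).
    field. lra. rewrite HH. field. lra. }
  apply is_lim_seq_spec. intros eps.
  set (R0 := Rmin (1/2) (eps/(8*exp 1))).
  assert (HR0 : 0 < R0 <= 1/2).
  { unfold R0. split; [|apply Rmin_l]. unfold Rmin. destruct (Rle_dec (1/2) (eps/(8*exp 1))). lra.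
    apply Rdiv_lt_0_compat. apply cond_pos. pose proof (exp_pos 1); lra. }
  assert (HR0e : 4 * exp 1 * R0 <= eps / 2).
  { assert (R0 <= eps/(8*exp 1)) by apply Rmin_r. pose proof (exp_pos 1).
    assert (eps/(8*exp 1) * (4 * exp 1) = eps/2) by (field; lra). nra. }
  set (M := 4 * L / (gam * k)).
  assert (HM : 0 < M) by (unfold M; apply Rdiv_lt_0_compat; nra).
  set (Y0 := Rmax 1 (Rmax (8*k) (Rmax (ln (/(alpha*R0)) / (kp-1)) (Rmax (M * Rabs (ln M)) (4/(alpha*gam)))))).
  assert (HY1 : 1 <= Y0) by apply Rmax_l.
  assert (HY2 : 8 * k <= Y0) by (eapply Rle_trans; [|apply Rmax_r]; apply Rmax_l).
  assert (HY3 : ln (/(alpha*R0)) / (kp-1) <= Y0) by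
    (eapply Rle_trans; [|apply Rmax_r]; eapply Rle_trans; [|apply Rmax_r]; apply Rmax_l).
  assert (HY4 : M * Rabs (ln M) <= Y0) by
    (eapply Rle_trans; [|apply Rmax_r]; eapply Rle_trans; [|apply Rmax_r]; eapply Rle_trans; [|apply Rmax_r]; apply Rmax_l).
  assert (HY5 : 4/(alpha*gam) <= Y0) by
    (eapply Rle_trans; [|apply Rmax_r]; eapply Rle_trans; [|apply Rmax_r]; eapply Rle_trans; [|apply Rmax_r]; apply Rmax_r).
  set (K := 1 + 2 / beta).
  assert (HK : 1 <= K) by (unfold K; assert (0 < 2/beta) by (apply Rdiv_lt_0_compat; lra); lra).
  set (q := exp (- (beta / 2))).
  assert (E1 : eventually (fun n => exp Y0 / alpha < INR n)).
  { exact (proj2 (is_lim_seq_spec _ _) is_lim_seq_INR (exp Y0 / alpha)). }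
  assert (Heps2 : 0 < eps / (2 * K)) by (apply Rdiv_lt_0_compat; [apply cond_pos|lra]).
  assert (E2 : eventually (fun n => Rabs (q ^ n - 0) < eps / (2 * K))).
  { refine (proj2 (is_lim_seq_spec _ _) (is_lim_seq_geom q _) (mkposreal _ Heps2)).
    unfold q. rewrite Rabs_pos_eq by (left; apply exp_pos). rewrite <- exp_0. apply exp_increasing. lra. }
  generalize (filter_and _ _ E1 E2). apply filter_imp. intros n [Hn1 Hn2].
  set (m := alpha * INR n).
  assert (Hm : exp Y0 < m).
  { unfold m. assert (exp Y0 = (exp Y0/alpha)*alpha) by (field; lra). nra. }
  assert (Hm0 : 0 < m) by (pose proof (exp_pos Y0); lra).
  assert (Hn0 : 0 < INR n) by (unfold m in Hm0; nra).
  set (l := ln m).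
  assert (Hl : Y0 < l) by (unfold l; rewrite <- (ln_exp Y0); apply ln_increasing; [apply exp_pos|exact Hm]).
  assert (Hml : exp l = m) by (unfold l; apply exp_ln; exact Hm0).
  set (ee := 2 * (k * l / m)).
  assert (Hee : 0 < ee < 1).
  { unfold ee. split. apply Rmult_lt_0_compat; [lra|]. apply Rdiv_lt_0_compat; [nra|lra].
    assert (exp l >= (1 + l/2) * (1 + l/2)).
    { replace l with (l/2 + l/2) at 1 by field. rewrite exp_plus. pose proof (exp_ineq1_le (l/2)). nra. }
    assert (2 * k * l < m) by nra.
    apply (Rmult_lt_reg_r m); [lra|]. replace (2 * (k * l / m) * m) with (2 * k * l) by (field; lra). lra. }
  assert (Hmee : m * ee = 2 * k * l) by (unfold ee; field; lra).
  assert (PW : forall w : nat, (1 <= w)%nat -> INR w <= lam * INR n ->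
     summand alpha k n w <= 2 * exp 1 * R0 * (1/2)^w + exp (- (beta * INR n))).
  { intros w Hw1 Hwl.
    assert (Hwn : (w <= n)%nat).
    { apply INR_le. pose proof (pos_INR n). nra. }
    assert (Hw0 : 1 <= INR w) by (apply (le_INR 1); exact Hw1).
    unfold summand, mm. cbv zeta. fold m. fold l. fold ee.
    set (y := (1 - ee) ^ w).
    assert (Hy0 : 0 <= y) by (apply pow_le; lra).
    set (s := ee * INR w).
    assert (Hs : 0 < s) by (unfold s; nra).
    assert (Hys : y <= exp (- s)) by (apply L_uw; exact Hee).
    assert (Hsplit : Binomial.C n w * / Rpower 2 m * Rpower (1 + y) m = Binomial.C n w * exp (m * (ln (1 + y) - ln 2))).
    { unfold Rpower. rewrite <- exp_Ropp. rewrite Rmult_assoc, <- exp_plus. f_equal. f_equal. ring. }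
    rewrite Hsplit.
    pose proof (C_nonneg n w) as HC0.
    assert (Hrhs0 : 0 <= 2 * exp 1 * R0 * (1/2)^w).
    { pose proof (exp_pos 1). assert (0 <= (1/2)^w) by (apply pow_le; lra).
      apply Rmult_le_pos; [|lra]. apply Rmult_le_pos; lra. }
    pose proof (exp_pos (- (beta * INR n))) as Hb0.
    assert (HG : exp (m * (ln (1 + y) - ln 2)) <= exp (- (m * (1 - y) / 2))) by (apply L_G; lra).
    assert (H1s : s / (1 + s) <= 1 - y) by (pose proof (L_1mexp s); lra).
    destruct (Rle_lt_dec s c) as [HsA|HsB].
    -
      assert (HG2 : exp (m * (ln (1 + y) - ln 2)) <= exp (- (kp * l * INR w))).
      { eapply Rle_trans; [exact HG|]. apply exp_le'. apply Ropp_le_contravar.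
        assert (Ha1 : s / (1 + c) <= s / (1 + s)).
        { unfold Rdiv. apply Rmult_le_compat_l; [lra|]. apply Rinv_le_contravar; lra. }
        assert (Ha2 : kp * l * INR w = m * (s / (1 + c)) / 2).
        { unfold kp, s. replace (m * (ee * INR w / (1 + c))) with ((m * ee) * INR w / (1 + c)) by (field; lra). rewrite Hmee. field. lra. }
        rewrite Ha2. unfold Rdiv. apply Rmult_le_compat_r; [lra|]. apply Rmult_le_compat_l; lra. }
      assert (HCb : Binomial.C n w <= exp 1 * INR n ^ w).
      { eapply Rle_trans. apply (L_binom_exp n w (/ INR n)); [apply Rinv_0_lt_compat; lra| exact Hwn].
        rewrite pow_inv, Rinv_inv. replace (INR n * / INR n) with 1 by (field; lra). lra. }
      set (r := INR n * exp (- (kp * l))).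
      assert (Hr : Binomial.C n w * exp (m * (ln (1 + y) - ln 2)) <= exp 1 * r ^ w).
      { eapply Rle_trans. apply Rmult_le_compat; [exact HC0| left; apply exp_pos | exact HCb | exact HG2].
        unfold r. rewrite Rpow_mult_distr, exp_pow'. replace (INR w * -(kp*l)) with (-(kp*l*INR w)) by ring. right; ring. }
      assert (Hrr : r = exp (- ((kp - 1) * l)) / alpha).
      { unfold r. replace (INR n) with (exp l / alpha) by (rewrite Hml; unfold m; field; lra).
        replace (- ((kp-1)*l)) with (l + - (kp*l)) by ring. rewrite exp_plus. field. lra. }
      assert (Hr0 : 0 <= r) by (unfold r; pose proof (exp_pos (- (kp * l))); nra).
      assert (HrR : r <= R0).
      { rewrite Hrr.
        assert (Hq1 : ln (/ (alpha * R0)) <= (kp - 1) * l).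
        { assert (ln (/ (alpha * R0)) / (kp - 1) < l) by lra.
          apply (Rmult_le_reg_r (/ (kp - 1))). apply Rinv_0_lt_compat; lra.
          replace ((kp - 1) * l * / (kp - 1)) with l by (field; lra). unfold Rdiv in *. lra. }
        assert (Hq2 : exp (- ((kp - 1) * l)) <= alpha * R0).
        { eapply Rle_trans. apply exp_le'. apply Ropp_le_contravar. exact Hq1.
          rewrite ln_Rinv by nra. rewrite Ropp_involutive, exp_ln by nra. lra. }
        apply (Rmult_le_reg_r alpha); [lra|]. unfold Rdiv. rewrite Rmult_assoc, Rinv_l by lra. lra. }
      eapply Rle_trans; [exact Hr|].
      destruct w as [|w']; [lia|].
      assert (r ^ w' <= (1/2) ^ w') by (apply pow_incr; lra).
      assert (0 <= r ^ w') by (apply pow_le; lra).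
      simpl. pose proof (exp_pos 1).
      assert (exp 1 * (r * r ^ w') <= exp 1 * (R0 * (1/2)^w')).
      { apply Rmult_le_compat_l; [lra|]. apply Rmult_le_compat; lra. }
      assert (2 * exp 1 * R0 * (1 / 2 * (1 / 2) ^ w') = exp 1 * (R0 * (1/2)^w')) by field.
      lra.
    - destruct (Rle_lt_dec s L) as [HsL|HsL].
      +
        assert (HG2 : exp (m * (ln (1 + y) - ln 2)) <= exp (- (m * gam))).
        { eapply Rle_trans; [exact HG|]. apply exp_le'. apply Ropp_le_contravar.
          assert (Hb1 : c / (1 + c) <= s / (1 + s)).
          { assert (c/(1+c) = 1 - /(1+c)) by (field; lra). assert (s/(1+s) = 1 - /(1+s)) by (field; lra).
            assert (/(1+s) <= /(1+c)) by (apply Rinv_le_contravar; lra). lra. }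
          assert (Hb2 : m * gam = m * (c / (1 + c)) / 2) by (unfold gam; field; lra).
          rewrite Hb2. unfold Rdiv. apply Rmult_le_compat_r; [lra|]. apply Rmult_le_compat_l; lra. }
        assert (Hl1 : 1 <= l) by lra.
        assert (Hlnl : 0 <= ln l) by (rewrite <- ln_1; apply ln_le; lra).
        assert (HCb : Binomial.C n w <= exp (INR n / l + INR w * ln l)).
        { eapply Rle_trans. apply (L_binom_exp n w (/ l)); [apply Rinv_0_lt_compat; lra| exact Hwn].
          rewrite pow_inv, Rinv_inv, (pow_exp_ln l) by lra. rewrite <- exp_plus. right. f_equal. }
        assert (Hlnl2 : ln l <= 2 * l / M).
        { assert (ln l = ln (l / M) + ln M) by (rewrite ln_div by lra; ring).
          assert (ln (l/M) <= l/M - 1) by (apply ln_le_sub1; apply Rdiv_lt_0_compat; lra).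
          assert (ln M <= Rabs (ln M)) by apply Rle_abs.
          assert (M * Rabs (ln M) <= l) by lra.
          assert (Rabs (ln M) <= l / M).
          { apply (Rmult_le_reg_l M); [lra|]. replace (M*(l/M)) with l by (field; lra). lra. }
          assert (2 * l / M = l/M + l/M) by (field; lra). lra. }
        assert (Hwl2 : INR w * ln l <= gam * m / 4).
        { assert (INR w * ln l * ee <= L * ln l).
          { replace (INR w * ln l * ee) with (s * ln l) by (unfold s; ring). apply Rmult_le_compat_r; lra. }
          assert (L * ln l <= L * (2 * l / M)) by (apply Rmult_le_compat_l; lra).
          assert (L * (2 * l / M) = gam * k * l / 2) by (unfold M; field; split; lra).
          assert (ee * (gam * m / 4) = gam * k * l / 2).
          { replace (ee * (gam * m / 4)) with ((m * ee) * gam / 4) by field. rewrite Hmee. field. }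
          apply (Rmult_le_reg_r ee); [lra|]. lra. }
        assert (Hnl : INR n / l <= gam * m / 4).
        { assert (4 <= alpha * gam * l).
          { assert (4 / (alpha * gam) < l) by lra.
            apply (Rmult_le_reg_r (/ (alpha * gam))). apply Rinv_0_lt_compat; nra.
            replace (alpha * gam * l * / (alpha * gam)) with l by (field; lra). unfold Rdiv in *. lra. }
          assert (gam * m / 4 - INR n / l = m * (alpha*gam*l - 4) / (4*alpha*l)) by (unfold m; field; lra).
          assert (0 <= m * (alpha*gam*l - 4) / (4*alpha*l)).
          { unfold Rdiv. apply Rmult_le_pos; [nra| left; apply Rinv_0_lt_compat; nra]. }
          lra. }
        assert (Hbn : beta * INR n <= gam * m / 2) by (unfold m; nra).
        eapply Rle_trans. apply Rmult_le_compat; [exact HC0| left; apply exp_pos | exact HCb | exact HG2].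
        rewrite <- exp_plus. apply Rle_trans with (exp (- (beta * INR n))); [|lra].
        apply exp_le'. lra.
      +
        assert (Hy_eta : y <= eta0) by (assert (exp (-s) < exp (-L)) by (apply exp_increasing; lra); lra).
        assert (HG2 : exp (m * (ln (1 + y) - ln 2)) <= exp (m * (ln (1 + eta0) - ln 2))).
        { apply exp_le'. apply Rmult_le_compat_l; [lra|]. assert (ln (1+y) <= ln (1+eta0)) by (apply ln_le; lra). lra. }
        set (p := lamstar) in *. set (x := p / (1 - p)).
        assert (Hx : 0 < x) by (unfold x; apply Rdiv_lt_0_compat; lra).
        assert (Hlnx : ln x < 0).
        { rewrite <- ln_1; apply ln_increasing; [lra|]. unfold x. apply (Rmult_lt_reg_r (1-p)); [lra|].
          unfold Rdiv; rewrite Rmult_assoc, Rinv_l by lra; lra. }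
        assert (HCb : Binomial.C n w <= exp (INR n * (alpha * ln (1 + delta)))).
        { eapply Rle_trans. apply (L_binom n w x); [exact Hx| exact Hwn].
          assert (H1x : 1 + x = / (1 - p)) by (unfold x; field; lra).
          rewrite H1x, (pow_exp_ln (/ (1 - p))), (pow_exp_ln x) by (try apply Rinv_0_lt_compat; lra).
          rewrite ln_Rinv by lra. unfold Rdiv. rewrite <- exp_Ropp, <- exp_plus. apply exp_le'.
          assert (Hlnx2 : ln x = ln p - ln (1 - p)) by (unfold x; apply ln_div; lra).
          assert (INR w <= p * INR n) by (pose proof (pos_INR n); nra).
          assert ((p * INR n - INR w) * ln x <= 0) by nra.
          rewrite <- Hent. rewrite Hlnx2 in *. nra. }
        assert (Hbn : beta * INR n <= alpha * kap * INR n) by (pose proof (pos_INR n); nra).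
        eapply Rle_trans. apply Rmult_le_compat; [exact HC0| left; apply exp_pos | exact HCb | exact HG2].
        rewrite <- exp_plus. apply Rle_trans with (exp (- (beta * INR n))); [|lra].
        apply exp_le'. unfold kap in Hbn. unfold m. nra. }
  assert (Hsum_nonneg : 0 <= S alpha k lam n).
  { unfold S. apply cond_pos_sum. intros w. destruct (Nat.eqb w 0); [lra|].
    destruct (Rle_dec _ _); [|lra]. unfold summand. cbv zeta. unfold Rpower.
    apply Rmult_le_pos; [apply Rmult_le_pos|]. apply C_nonneg. left; apply Rinv_0_lt_compat, exp_pos. left; apply exp_pos. }
  assert (Hsum_le : S alpha k lam n <= 2 * exp 1 * R0 * 2 + exp (- (beta * INR n)) * (INR n + 1)).
  { unfold S. eapply Rle_trans. apply (sum_Rle _ (fun w => 2 * exp 1 * R0 * (1/2)^w + exp (- (beta * INR n)))).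
    - intros w Hw. assert (0 <= 2 * exp 1 * R0 * (1/2)^w + exp (- (beta * INR n))).
      { pose proof (exp_pos 1). pose proof (exp_pos (- (beta * INR n))). assert (0 <= (1/2)^w) by (apply pow_le; lra).
        assert (0 <= 2 * exp 1 * R0 * (1/2)^w) by (apply Rmult_le_pos; [|lra]; apply Rmult_le_pos; lra). lra. }
      destruct (Nat.eqb w 0) eqn:E; [lra|].
      destruct (Rle_dec (INR w) (lam * INR n)) as [h|h]; [|lra].
      apply PW; [apply Nat.eqb_neq in E; lia| exact h].
    - rewrite plus_sum, sum_cte, S_INR.
      assert (Hs1 : sum_f_R0 (fun w => 2*exp 1*R0*(1/2)^w) n = 2*exp 1*R0 * sum_f_R0 (fun w => (1/2)^w) n)
        by (rewrite scal_sum; apply sum_eq; intros; ring).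
      rewrite Hs1, tech3 by lra.
      assert (0 <= (1/2)^(Datatypes.S n)) by (apply pow_le; lra).
      assert ((1 - (1/2)^(Datatypes.S n))/(1-1/2) = 2 * (1 - (1/2)^(Datatypes.S n))) by field.
      assert (0 <= 2 * exp 1 * R0) by (pose proof (exp_pos 1); nra).
      assert (2 * exp 1 * R0 * ((1 - (1/2)^(Datatypes.S n))/(1-1/2)) <= 2 * exp 1 * R0 * 2).
      { apply Rmult_le_compat_l; lra. }
      lra. }
  assert (Htail : exp (- (beta * INR n)) * (INR n + 1) < eps / 2).
  { set (a := beta * INR n / 2).
    assert (Ha : exp (- (beta * INR n)) = exp (-a) * exp (-a)) by (rewrite <- exp_plus; f_equal; unfold a; field).
    assert (Hq : q ^ n = exp (- a)) by (unfold q; rewrite exp_pow'; f_equal; unfold a; field).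
    rewrite Rminus_0_r, Rabs_pos_eq in Hn2 by (apply pow_le; unfold q; left; apply exp_pos).
    assert (Hna : INR n + 1 <= K * exp a).
    { pose proof (exp_ineq1_le a). assert (0 < 2/beta) by (apply Rdiv_lt_0_compat; lra).
      assert (K * (1 + a) = 1 + a + 2/beta + INR n) by (unfold K, a; field; lra).
      assert (0 <= a) by (unfold a; pose proof (pos_INR n); nra).
      assert (K * (1 + a) <= K * exp a) by (apply Rmult_le_compat_l; lra). lra. }
    assert (Hinv : exp (-a) * exp a = 1) by (rewrite <- exp_plus; replace (-a+a) with 0 by ring; apply exp_0).
    assert (HKq : K * exp (-a) < eps / 2).
    { rewrite <- Hq. apply Rlt_le_trans with (K * (eps / (2 * K))). apply Rmult_lt_compat_l; lra.
      right. field. lra. }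
    rewrite Ha. pose proof (exp_pos (-a)).
    apply Rle_lt_trans with (exp (-a) * exp (-a) * (K * exp a)).
    - apply Rmult_le_compat_l; [nra|exact Hna].
    - replace (exp (-a) * exp (-a) * (K * exp a)) with (K * exp (-a) * (exp (-a) * exp a)) by ring.
      rewrite Hinv. lra. }
  rewrite Rminus_0_r, Rabs_pos_eq by exact Hsum_nonneg. lra.
Qed.
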